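(* Let $F_1(x_0,x_1,x_2)$, $F_2(y_0,y_1,y_2)$ be homogeneous of degree $d$ such that $X: F_1(x)=F_2(y)$ in $\mathbb{P}^5(\mathbb{C})$ is smooth. If $F_1\sim F_2$, then $X$ contains exactly $|\mathrm{Aut}(F_1)|$ planes of rank $3$.
   Context: Coordinates on $\mathbb{P}^5$ are $[x_0:x_1:x_2:y_0:y_1:y_2]$. Every plane in $\mathbb{P}^5$ is given by a rank-3 system $Ax=By$ with $A,B$ complex $3\times3$ matrices; the plane is of rank $k$ if $\mathrm{rank}\,A=k$ (this does not depend on the chosen system). $F\sim G$ means there exists $g\in\mathrm{GL}_3(\mathbb{C})$ with $F(gx)=G(x)$; $\mathrm{Aut}(F)=\{g\in\mathrm{GL}_3(\mathbb{C}) : F(gx)=F(x)\}$. *)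

(* Defs.v *)
From HB Require Import structures.
From mathcomp Require Import all_boot all_order all_algebra.
From mathcomp Require Import mpoly complex.
From mathcomp Require Import reals.

Set Implicit Arguments.
Unset Strict Implicit.
Unset Printing Implicit Defensive.

Import Order.TTheory GRing.Theory Num.Theory.
Local Open Scope ring_scope.

Section Defs.
Variable K : fieldType.

Definition evalc (F : {mpoly K[3]}) (x : 'cV[K]_3) : K :=
  F.@[fun i => x i 0].

Definition equiv_form (F G : {mpoly K[3]}) : Prop :=
  exists g : 'M[K]_3, g \in unitmx /\ forall x, evalc F (g *m x) = evalc G x.

Definition Aut (F : {mpoly K[3]}) : Type :=
  {g : 'M[K]_3 | g \in unitmx /\ forall x, evalc F (g *m x) = evalc F x}.

Definition xpart (v : 'rV[K]_(3 + 3)) : 'cV[K]_3 := (lsubmx v)^T.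
Definition ypart (v : 'rV[K]_(3 + 3)) : 'cV[K]_3 := (rsubmx v)^T.

(* X : F1(x) = F2(y) is smooth: there is no nonzero point of C^6 on X at
   which all partial derivatives of F1(x) - F2(y) vanish; these partials are
   dF1/dx_i (x) and -dF2/dy_i (y). *)
Definition smooth_X (F1 F2 : {mpoly K[3]}) : Prop :=
  forall v : 'rV[K]_(3 + 3), v != 0 ->
    evalc F1 (xpart v) = evalc F2 (ypart v) ->
    ~ ((forall i : 'I_3, evalc (F1^`M(i)) (xpart v) = 0) /\
       (forall i : 'I_3, evalc (F2^`M(i)) (ypart v) = 0)).

Definition sol_set (A B : 'M[K]_3) (v : 'rV[K]_(3 + 3)) : bool :=
  A *m xpart v == B *m ypart v.

(* U (a 3-dim linear subspace of C^6, i.e. a plane of P^5) is a plane of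
   rank 3: it is given by a rank-3 system A x = B y with rank A = 3. *)
Definition rank3_plane (U : {vspace 'rV[K]_(3 + 3)}) : Prop :=
  \dim U = 3%N /\
  exists A B : 'M[K]_3,
    \rank (row_mx A B) = 3%N /\ \rank A = 3%N /\
    forall v, (v \in U) = sol_set A B v.

Definition plane_in_X (F1 F2 : {mpoly K[3]}) (U : {vspace 'rV[K]_(3 + 3)}) : Prop :=
  forall v, v \in U -> evalc F1 (xpart v) = evalc F2 (ypart v).

Definition rank3_planes_in_X (F1 F2 : {mpoly K[3]}) : Type :=
  {U : {vspace 'rV[K]_(3 + 3)} | rank3_plane U /\ plane_in_X F1 F2 U}.

End Defs.

(* Main.v *)
Require Import Defs.
From HB Require Import structures.
From mathcomp Require Import all_boot all_order all_algebra.
From mathcomp Require Import mpoly complex.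
From mathcomp Require Import reals.
From Stdlib Require Import ClassicalEpsilon ProofIrrelevance.

Set Implicit Arguments.
Unset Strict Implicit.
Unset Printing Implicit Defensive.
Import Order.TTheory GRing.Theory Num.Theory.
Local Open Scope ring_scope.
Section SB.
Variables (T U : Type) (f : T -> U) (g : U -> T).
Hypothesis (injf : injective f) (injg : injective g).

Definition Cset (x : T) : Prop :=
  exists n, exists x0, (~ exists u, g u = x0) /\ x = iter n (fun z => g (f z)) x0.

Definition hSB (x : T) : U :=
  match excluded_middle_informative (Cset x) with
  | left _ => f x
  | right _ =>
    match excluded_middle_informative (exists u, g u = x) with
    | left p => proj1_sig (constructive_indefinite_description _ p)
    | right _ => f x
    end
  end.

Lemma hSB_notC x : ~ Cset x -> g (hSB x) = x.
Proof.
move=> nC; rewrite /hSB; case: excluded_middle_informative => // _.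
case: excluded_middle_informative => [p|np].
  by case: (constructive_indefinite_description _ p).
by exfalso; apply: nC; exists 0%N, x; split.
Qed.

Lemma Cset_step x : Cset x -> Cset (g (f x)).
Proof. by case=> n [x0 [nx0 ->]]; exists n.+1, x0; split=> //; rewrite iterS. Qed.

Lemma hSB_inj : injective hSB.
Proof.
have key : forall x y, Cset x -> ~ Cset y -> hSB x = hSB y -> x = y.
  move=> x y Cx nCy e; exfalso; apply: (nCy).
  rewrite -(hSB_notC nCy) -e /hSB; case: excluded_middle_informative => // _.
  exact: Cset_step.
move=> x y e.
case: (classic (Cset x)) => Cx; case: (classic (Cset y)) => Cy.
- by move: e; rewrite /hSB; do 2 case: excluded_middle_informative => //; move=> *; apply: injf.
- exact: key.
- by apply/esym/key => //; rewrite e.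
- by rewrite -(hSB_notC Cx) -(hSB_notC Cy) e.
Qed.

Lemma hSB_surj : forall u, exists x, hSB x = u.
Proof.
move=> u; case: (classic (Cset (g u))) => Cgu.
  case: Cgu => [[|n] [x0 [nx0 e]]].
    by exfalso; apply: nx0; exists u.
  rewrite iterS in e; move/injg: e => e.
  exists (iter n (fun z => g (f z)) x0).
  rewrite /hSB; case: excluded_middle_informative => [_|nC]; first by rewrite e.
  by exfalso; apply: nC; exists n, x0.
by exists (g u); apply: injg; rewrite hSB_notC.
Qed.

End SB.

Lemma SB_bij (T U : Type) (f : T -> U) (g : U -> T) :
  injective f -> injective g -> exists h : T -> U, bijective h.
Proof.
move=> injf injg; exists (hSB f g).
have inj := hSB_inj injf; have sur := hSB_surj f injg.
pose k u := proj1_sig (constructive_indefinite_description _ (sur u)).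
have kK : cancel k (hSB f g).
  by move=> u; rewrite /k; case: constructive_indefinite_description.
by exists k => // x; apply: inj; exact: kK.
Qed.

Section PolyAux.
Variable K : numFieldType.
Definition Phi (v : 'I_3 -> {poly K}) (p : {mpoly K[3]}) : {poly K} :=
  mmap (@polyC K) v p.

Lemma PhiM v p q : Phi v (p * q) = Phi v p * Phi v q.
Proof. exact: rmorphM. Qed.
Lemma PhiD v p q : Phi v (p + q) = Phi v p + Phi v q.
Proof. exact: mmapD. Qed.
Lemma Phi1 v : Phi v 1 = 1.
Proof. exact: rmorph1. Qed.

Section Chain.
Variables (y : 'I_3 -> K) (i : 'I_3).
Definition vv j : {poly K} := (y j)%:P + (j == i)%:R *: 'X.
Definition Pch (q : {mpoly K[3]}) := (Phi vv q)^`() = Phi vv (q^`M(i)).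

Lemma Pch1 : Pch 1.
Proof.
rewrite /Pch Phi1 -polyC1 derivC -mpolyC1 mderivC /Phi.
by rewrite mmapC.
Qed.

Lemma PchM p q : Pch p -> Pch q -> Pch (p * q).
Proof.
rewrite /Pch => hp hq; rewrite PhiM derivM hp hq mderivM.
by rewrite PhiD !PhiM.
Qed.

Lemma PchX j : Pch 'X_j.
Proof.
rewrite /Pch /Phi mmapX mmap1U /vv derivD derivC add0r derivZ derivX.
rewrite mderivX mnm1E mmapZ.
case: (eqVneq j i) => [->|_].
  have -> : (U_(i) - U_(i) = 0)%MM by apply/mnmP => k; rewrite mnmBE subnn mnm0E.
  by rewrite mmapX mmap11 alg_polyC mulr1.
by rewrite /= !scale0r polyC0 mul0r.
Qed.

Lemma Pch_monom m : Pch 'X_[m].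
Proof.
rewrite mpolyXE_id; apply: (big_ind Pch Pch1 PchM) => j _.
elim: (m j) => [|k IH]; first by rewrite expr0; exact: Pch1.
by rewrite exprS; apply: PchM => //; apply: PchX.
Qed.

Lemma Phi_deriv p : Pch p.
Proof.
elim/mpolyind: p => [|c m p _ _ IH].
  by rewrite /Pch /Phi mmap0 deriv0 mderiv0 mmap0.
move: IH; rewrite /Pch mderivD /Phi !mmapD derivD => ->; congr (_ + _).
rewrite mderivZ !mmapZ deriv_mulC; congr (_ * _); exact: Pch_monom.
Qed.
End Chain.


Lemma poly_eq_pw (P Q : {poly K}) : (forall t, P.[t] = Q.[t]) -> P = Q.
Proof.
move=> h; apply/eqP; rewrite -subr_eq0; apply/negPn/negP => nz.
pose s := [seq (k%:R : K) | k <- iota 0 (size (P - Q))].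
have : (size s < size (P - Q)%R)%N.
  apply: max_poly_roots nz _ _.
    by apply/allP => x /mapP [k _ ->]; rewrite /root hornerD hornerN h subrr.
  rewrite map_inj_uniq ?iota_uniq //.
  by move=> a b /eqP; rewrite eqr_nat => /eqP.
by rewrite size_map size_iota ltnn.
Qed.

Lemma Phi_horner v p t : (Phi v p).[t] = p.@[fun j => (v j).[t]].
Proof.
rewrite /Phi /mmap mevalE horner_sum; apply: eq_bigr => m _.
rewrite hornerM hornerC /mmap1 horner_prod; congr (_ * _).
by apply: eq_bigr => j _; rewrite horner_exp.
Qed.

Lemma partial_zero d (p : {mpoly K[3]}) (y : 'I_3 -> K) (i : 'I_3) (c : K) :
  (1 < d)%N ->
  (forall t, p.@[fun j => y j + (j == i)%:R * t] = c * t ^+ d) ->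
  (p^`M(i)).@[y] = 0.
Proof.
move=> d2 h.
have hQ : Phi (vv y i) p = c *: 'X^d.
  apply: poly_eq_pw => t; rewrite Phi_horner hornerZ hornerXn -h.
  apply: meval_eq => j.
  by rewrite /vv hornerD hornerC hornerZ hornerX.
have := Phi_deriv y i p; rewrite /Pch hQ derivZ derivXn => /(congr1 (horner^~ 0)).
rewrite hornerZ hornerMn hornerXn expr0n /= Phi_horner.
case: d d2 {h hQ} => [|[|d]] //= _; rewrite mul0rn mulr0 => ->.
apply: meval_eq => j.
by rewrite /vv hornerD hornerC hornerZ hornerX mulr0 addr0.
Qed.

Lemma homog_scale d (p : {mpoly K[3]}) (t : K) (x : 'I_3 -> K) :
  p \is d.-homog -> p.@[fun j => t * x j] = t ^+ d * p.@[x].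
Proof.
move=> /dhomogP hd; rewrite !mevalE mulr_sumr; apply: eq_big_seq => m mp.
rewrite mulrCA; congr (_ * _).
under eq_bigr do rewrite exprMn.
rewrite big_split /= prodrXr; have := hd m mp.
move=> <-; congr (_ ^+ _ * _); exact: (esym (mdegE m)).
Qed.

End PolyAux.

Section Planes.
Variable K : fieldType.
Variables F1 F2 : {mpoly K[3]}.

Lemma xpart_row (x y : 'cV[K]_3) : xpart (row_mx x^T y^T) = x.
Proof. by rewrite /xpart row_mxKl trmxK. Qed.
Lemma ypart_row (x y : 'cV[K]_3) : ypart (row_mx x^T y^T) = y.
Proof. by rewrite /ypart row_mxKr trmxK. Qed.
Lemma row_split (v : 'rV[K]_(3 + 3)) : v = row_mx (xpart v)^T (ypart v)^T.
Proof. by rewrite /xpart /ypart !trmxK hsubmxK. Qed.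

Lemma mx_ext (M M' : 'M[K]_3) : (forall y : 'cV_3, M *m y = M' *m y) -> M = M'.
Proof.
move=> h; apply/matrixP => i j.
have := congr1 (fun A : 'cV_3 => A i 0) (h (delta_mx j 0)).
by rewrite -!colE !mxE.
Qed.

Definition Sset := {M : 'M[K]_3 | forall y, evalc F1 (M *m y) = evalc F2 y}.

Lemma rank3_planeM (U : {vspace 'rV[K]_(3 + 3)}) : rank3_plane U ->
  exists M : 'M[K]_3, forall v, (v \in U) = (xpart v == M *m ypart v).
Proof.
case=> _ [A [B [_ [rA hU]]]].
have uA : A \in unitmx by rewrite -row_free_unit /row_free rA.
exists (invmx A *m B) => v; rewrite hU /sol_set.
apply/eqP/eqP => [e|e].
  by rewrite -mulmxA -e mulKmx.
by rewrite e mulmxA mulmxA mulmxV // mul1mx.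
Qed.

Definition PlaneM (U : rank3_planes_in_X F1 F2) : 'M[K]_3 :=
  proj1_sig (constructive_indefinite_description _
     (rank3_planeM (proj1 (proj2_sig U)))).

Lemma PlaneMP (U : rank3_planes_in_X F1 F2) v : (v \in sval U) = (xpart v == PlaneM U *m ypart v).
Proof.
rewrite /PlaneM; case: constructive_indefinite_description => M hM /=.
exact: hM.
Qed.

Lemma PlaneM_S (U : rank3_planes_in_X F1 F2) y : evalc F1 (PlaneM U *m y) = evalc F2 y.
Proof.
have hv : row_mx (PlaneM U *m y)^T y^T \in sval U.
  by rewrite PlaneMP xpart_row ypart_row.
have := proj2 (proj2_sig U) _ hv.
by rewrite xpart_row ypart_row.
Qed.

Definition planes_to_S (U : rank3_planes_in_X F1 F2) : Sset :=
  exist _ (PlaneM U) (PlaneM_S U).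

Lemma planes_to_S_inj : injective planes_to_S.
Proof.
move=> [U hU] [U' hU'] /(congr1 sval) /= e.
have eU : U = U'.
  apply/vspaceP => v.
  have := PlaneMP (exist _ U hU) v; have := PlaneMP (exist _ U' hU') v.
  by rewrite /= e => -> ->.
subst U'; congr exist; exact: proof_irrelevance.
Qed.


Definition Pmx (M : 'M[K]_3) : 'M[K]_(3, 3 + 3) := row_mx M^T 1%:M.

Definition UM (M : 'M[K]_3) : {vspace 'rV[K]_(3 + 3)} :=
  limg (linfun (mulmxr (Pmx M))).

Lemma UMP M v : (v \in UM M) = (xpart v == M *m ypart v).
Proof.
apply/idP/eqP.
  case/memv_imgP => u _ ->; rewrite lfunE /= /Pmx mul_mx_row mulmx1.
  by rewrite /xpart /ypart row_mxKl row_mxKr trmx_mul trmxK.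
move=> e; rewrite [v]row_split e.
have -> : row_mx (M *m ypart v)^T (ypart v)^T = mulmxr (Pmx M) (ypart v)^T.
  by rewrite /= /Pmx mul_mx_row mulmx1 trmx_mul.
by rewrite -lfunE; apply: memv_img; apply: memvf.
Qed.

Lemma UM_dim M : \dim (UM M) = 3%N.
Proof.
rewrite /UM limg_dim_eq.
  by rewrite dimvf.
rewrite capfv; apply/eqP/lker0P => u u'; rewrite !lfunE /= /Pmx !mul_mx_row !mulmx1.
by move/(congr1 rsubmx); rewrite !row_mxKr.
Qed.

Lemma UM_rank3 M : rank3_plane (UM M).
Proof.
split; first exact: UM_dim.
exists 1%:M, M; split; last split.
- apply/eqP; rewrite eqn_leq rank_leq_row /=.
  have h := mxrankM_maxl (row_mx (1%:M : 'M[K]_3) M) (col_mx 1%:M 0).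
  by rewrite mul_row_col mulmx0 addr0 mulmx1 mxrank1 in h.
- exact: mxrank1.
- by move=> v; rewrite UMP /sol_set mul1mx.
Qed.

Lemma UM_inX (M : Sset) : plane_in_X F1 F2 (UM (sval M)).
Proof.
by move=> v; rewrite UMP => /eqP ->; apply: (proj2_sig M).
Qed.

Definition S_to_planes (M : Sset) : rank3_planes_in_X F1 F2 :=
  exist _ (UM (sval M)) (conj (UM_rank3 (sval M)) (@UM_inX M)).

Lemma S_to_planes_inj : injective S_to_planes.
Proof.
move=> [M hM] [M' hM'] /(congr1 sval) /= e.
have eM : M = M'.
  apply: mx_ext => y.
  have : row_mx (M *m y)^T y^T \in UM M by rewrite UMP xpart_row ypart_row.
  by rewrite e UMP xpart_row ypart_row => /eqP.
subst M'; congr exist; exact: proof_irrelevance.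
Qed.

End Planes.

Section AutS.
Variable K : numFieldType.
Variables F1 F2 : {mpoly K[3]}.
Variable g0 : 'M[K]_3.
Hypothesis ug0 : g0 \in unitmx.
Hypothesis hg0 : forall x, evalc F1 (g0 *m x) = evalc F2 x.

Definition SsetK := {M : 'M[K]_3 | forall y, evalc F1 (M *m y) = evalc F2 y}.

Lemma Aut_S_prop (g : Aut F1) y : evalc F1 ((sval g *m g0) *m y) = evalc F2 y.
Proof. by rewrite -mulmxA (proj2 (proj2_sig g)) hg0. Qed.

Definition Aut_to_S (g : Aut F1) : SsetK := exist _ _ (Aut_S_prop g).

Lemma Aut_to_S_inj : injective Aut_to_S.
Proof.
move=> [g hg] [g' hg'] /(congr1 sval) /= /(congr1 (mulmx^~ (invmx g0))).
rewrite !mulmxK // => e; subst g'; congr exist; exact: proof_irrelevance.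
Qed.

Lemma evalc_shift (F : {mpoly K[3]}) (y : 'cV[K]_3) i t :
  evalc F (y + t *: delta_mx i 0) = F.@[fun j => y j 0 + (j == i)%:R * t].
Proof.
rewrite /evalc; apply: meval_eq => j; rewrite !mxE eqxx andbT.
by rewrite mulrC.
Qed.

Lemma evalc_scale d (F : {mpoly K[3]}) (w : 'cV[K]_3) t : F \is d.-homog ->
  evalc F (t *: w) = t ^+ d * evalc F w.
Proof.
move=> hd; rewrite /evalc.
transitivity (F.@[fun j => t * w j 0]); last exact: homog_scale.
by apply: meval_eq => j; rewrite mxE.
Qed.

Lemma S_unit d : (1 < d)%N -> F1 \is d.-homog -> F2 \is d.-homog ->
  smooth_X F1 F2 -> forall M : SsetK, sval M \in unitmx.
Proof.
move=> d2 h1 h2 sm [M hM] /=; apply/negPn/negP => nu.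
have : \det M^T == 0.
  by rewrite det_tr; move: nu; rewrite unitmxE unitfE negbK.
case/det0P => v vn0 vM.
have My0 : M *m v^T = 0 by rewrite -(trmxK M) -trmx_mul vM trmx0.
pose w : 'rV[K]_(3 + 3) := row_mx (0 : 'cV[K]_3)^T (v^T)^T.
have xw : xpart w = 0 by rewrite xpart_row.
have yw : ypart w = v^T by rewrite ypart_row.
apply: (sm w).
- apply/negP => /eqP /(congr1 rsubmx); rewrite row_mxKr trmxK linear0.
  by move/eqP; rewrite (negbTE vn0).
- by rewrite xw yw -hM My0.
split => i.
- rewrite xw.
  have -> : evalc F1^`M(i) 0 = F1^`M(i).@[fun j => 0].
    by apply: meval_eq => j; rewrite mxE.
  apply: (partial_zero (c := F1.@[fun j => (j == i)%:R])) d2 _ => t.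
  rewrite mulrC -homog_scale //; apply: meval_eq => j; by rewrite add0r mulrC.
- rewrite yw /evalc.
  apply: (partial_zero (c := evalc F1 (M *m delta_mx i 0))) d2 _ => t.
  rewrite -evalc_shift -hM mulmxDr My0 add0r -scalemxAr mulrC.
  exact: evalc_scale.
Qed.

Lemma S_Aut_prop d (hd : (1 < d)%N) (h1 : F1 \is d.-homog) (h2 : F2 \is d.-homog)
  (sm : smooth_X F1 F2) (M : SsetK) :
  (sval M *m invmx g0 \in unitmx) /\
  forall x, evalc F1 ((sval M *m invmx g0) *m x) = evalc F1 x.
Proof.
split.
  by rewrite unitmx_mul unitmx_inv ug0 (S_unit hd h1 h2 sm M).
move=> x; rewrite -mulmxA (proj2_sig M) -hg0 mulmxA mulmxV // mul1mx.
reflexivity.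
Qed.

End AutS.

Section Hotel.
Variable K : numFieldType.

Definition hh (z : K) : K :=
  if excluded_middle_informative (exists n : nat, z = n%:R) then z + 1 else z.

Lemma hh_neq0 z : hh z != 0.
Proof.
rewrite /hh; case: excluded_middle_informative => [[n zn]|nn] /=.
  by rewrite zn natr1 pnatr_eq0.
by apply/eqP => z0; apply: nn; exists 0%N; rewrite z0.
Qed.

Lemma hh_inj : injective hh.
Proof.
move=> z w; rewrite /hh.
case: excluded_middle_informative => [[n zn]|nz];
case: excluded_middle_informative => [[m wm]|nw] /=.
- by move/addIr.
- by move=> e; exfalso; apply: nw; exists n.+1; rewrite -e zn natr1.
- by move=> e; exfalso; apply: nz; exists m.+1; rewrite e wm natr1.
- by [].
Qed.

Definition e3 : 'rV[K]_3 := delta_mx 0 0.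
Definition i0 : 'I_3 := @Ordinal 3 0 isT.
Definition i1 : 'I_3 := @Ordinal 3 1 isT.
Definition i2 : 'I_3 := @Ordinal 3 2 isT.

Definition Phim (N : 'M[K]_3) : 'M[K]_3 := \matrix_(i, j)
  match nat_of_ord i, nat_of_ord j with
  | 0, 0 => 1 | 0, _ => 0
  | 1, 0 => N i1 i0 | 1, 1 => hh (N i1 i1) | 1, _ => hh (N i1 i1) * N i1 i2
  | _, 0 => N i2 i0 | _, 1 => N i2 i1 * hh (N i1 i1)
  | _, _ => N i2 i1 * hh (N i1 i1) * N i1 i2 + hh (N i2 i2)
  end.

Definition Lm (N : 'M[K]_3) : 'M[K]_3 := \matrix_(i, j)
  match nat_of_ord i, nat_of_ord j with
  | 0, 0 => 1
  | 1, 0 => N i1 i0 | 1, 1 => hh (N i1 i1)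
  | 2, 0 => N i2 i0 | 2, 1 => N i2 i1 * hh (N i1 i1) | 2, 2 => hh (N i2 i2)
  | _, _ => 0
  end.

Definition Um (N : 'M[K]_3) : 'M[K]_3 := \matrix_(i, j)
  match nat_of_ord i, nat_of_ord j with
  | 0, 0 => 1 | 1, 1 => 1 | 2, 2 => 1 | 1, 2 => N i1 i2
  | _, _ => 0
  end.

Lemma ord3P (P : 'I_3 -> Prop) : P i0 -> P i1 -> P i2 -> forall i, P i.
Proof.
move=> h0 h1 h2 [[|[|[|k]]] Hk] //.
- by rewrite (_ : Ordinal Hk = i0) //; apply: val_inj.
- by rewrite (_ : Ordinal Hk = i1) //; apply: val_inj.
- by rewrite (_ : Ordinal Hk = i2) //; apply: val_inj.
Qed.

Lemma Phim_LU N : Phim N = Lm N *m Um N.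
Proof.
apply/matrixP; apply: ord3P; apply: ord3P;
rewrite !mxE !big_ord_recl big_ord0 /= !mxE /=.
all: try (by rewrite ?(mulr0, mul0r, mulr1, mul1r, addr0, add0r)).
Qed.

Lemma Phim_unit N : Phim N \in unitmx.
Proof.
rewrite Phim_LU unitmx_mul !unitmxE.
have -> : \det (Um N) = 1.
  rewrite -det_tr det_trig.
    by rewrite !big_ord_recl big_ord0 /= !mxE /= !mulr1.
  apply/is_trig_mxP; apply: ord3P; apply: ord3P; by rewrite //= !mxE.
rewrite unitr1 andbT det_trig.
  rewrite !big_ord_recl big_ord0 /= !mxE /= mul1r mulr1 unitfE.
  by rewrite mulf_neq0 // hh_neq0.
apply/is_trig_mxP; apply: ord3P; apply: ord3P; by rewrite //= !mxE.
Qed.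

Lemma Phim_row0 N : e3 *m Phim N = e3.
Proof.
apply/matrixP => i j; rewrite ord1; move: j; apply: ord3P;
by rewrite !mxE !big_ord_recl big_ord0 /= !mxE /= ?(mulr0, mul0r, mulr1, addr0, add0r).
Qed.

Lemma Phim_inj N1 N2 :
  e3 *m N1 = e3 -> e3 *m N2 = e3 ->
  Phim N1 = Phim N2 -> N1 = N2.
Proof.
move=> e1 e2 eP.
have E i j : Phim N1 i j = Phim N2 i j by rewrite eP.
have r11 : N1 i1 i1 = N2 i1 i1 by apply: hh_inj; have := E i1 i1; rewrite !mxE.
have r10 : N1 i1 i0 = N2 i1 i0 by have := E i1 i0; rewrite !mxE.
have r20 : N1 i2 i0 = N2 i2 i0 by have := E i2 i0; rewrite !mxE.
have r12 : N1 i1 i2 = N2 i1 i2.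
  have := E i1 i2; rewrite !mxE /= r11; apply: mulfI; exact: hh_neq0.
have r21 : N1 i2 i1 = N2 i2 i1.
  have := E i2 i1; rewrite !mxE /= r11; apply: mulIf; exact: hh_neq0.
have r22 : N1 i2 i2 = N2 i2 i2.
  have := E i2 i2; rewrite !mxE /= r11 r12 r21 => /addrI; exact: hh_inj.
have r0 j : N1 i0 j = N2 i0 j.
  have := congr1 (fun A : 'rV_3 => A 0 j) (etrans e1 (esym e2)).
  rewrite /= /e3 -!rowE !mxE.
  by have -> : i0 = 0 by apply: val_inj.
apply/matrixP; apply: ord3P; apply: ord3P => //.
Qed.

End Hotel.

Section Lin.
Variable K : fieldType.

Lemma homog1_E (p : {mpoly K[3]}) : p \is 1.-homog ->
  p = \sum_(j < 3) p@_U_(j) *: 'X_j.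
Proof.
move=> hp; apply/mpolyP => m; rewrite raddf_sum /=.
under eq_bigr do rewrite mcoeffZ mcoeffX.
case: (boolP (mdeg m == 1%N)) => [/mdeg1P [k /eqP ->]|nm].
  rewrite (bigD1 k) //= eqxx mulr1 big1 ?addr0 // => j ne.
  by rewrite eq_mnm1 (negbTE ne) mulr0.
rewrite (dhomog_nemf_coeff hp nm) big1 // => j _.
case: eqP => [e|_]; last by rewrite mulr0.
by move: nm; rewrite -e mdeg1.
Qed.

Lemma homog1_eval (p : {mpoly K[3]}) x : p \is 1.-homog ->
  p.@[x] = \sum_(j < 3) p@_U_(j) * x j.
Proof.
move=> hp; rewrite {1}(homog1_E hp) raddf_sum /=; apply: eq_bigr => j _.
by rewrite mevalZ mevalXU.
Qed.

Lemma homog0_E (p : {mpoly K[3]}) : p \is 0.-homog -> p = (p@_0)%:MP.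
Proof.
move=> hp; apply/mpolyP => m; rewrite mcoeffC.
case: (eqVneq m 0%MM) => [->|nm]; first by rewrite mulr1.
rewrite mulr0; apply: (dhomog_nemf_coeff hp).
by rewrite mdeg_eq0.
Qed.

Definition arow (p : {mpoly K[3]}) : 'rV[K]_3 := \row_j p@_U_(j).

Lemma evalc_lin (p : {mpoly K[3]}) x : p \is 1.-homog ->
  evalc p x = (arow p *m x) 0 0.
Proof.
move=> hp; rewrite /evalc homog1_eval // !mxE; apply: eq_bigr => j _.
by rewrite mxE.
Qed.

Lemma exists_Q (a : 'rV[K]_3) : a != 0 ->
  exists Q : 'M[K]_3, Q \in unitmx /\ delta_mx 0 0 *m Q = a.
Proof.
move=> an0.
have ra : \rank a = 1%N.
  apply/eqP; rewrite eqn_leq rank_leq_row lt0n mxrank_eq0 an0 //.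
have := mulmx_ebase a; rewrite ra.
set c := col_ebase a; set R0 := row_ebase a => ea.
have uc : c 0 0 \is a GRing.unit.
  by rewrite -det_mx11 -unitmxE col_ebase_unit.
exists (c 0 0 *: R0); split; first by rewrite unitmxZ // row_ebase_unit.
rewrite -[RHS]ea [c in RHS]mx11_scalar mul_scalar_mx -scalemxAl -scalemxAr.
congr (_ *: (_ *m _)).
apply/matrixP => i j; rewrite !ord1 !mxE /= andbT.
by case: j => [[|k] ?].
Qed.

End Lin.

Lemma const_nz (K : fieldType) : (const_mx 1 : 'rV[K]_(3 + 3)) != 0.
Proof. by apply/eqP => /matrixP /(_ 0 0); rewrite !mxE; apply/eqP; exact: oner_neq0. Qed.

Lemma rv_ext (K : fieldType) (u w : 'rV[K]_3) :
  (forall x : 'cV_3, (u *m x) 0 0 = (w *m x) 0 0) -> u = w.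
Proof.
move=> h; apply/matrixP => i j; rewrite ord1.
by have := h (delta_mx j 0); rewrite -!colE !mxE.
Qed.

Section AutS1.
Variable K : numFieldType.
Variables F1 F2 : {mpoly K[3]}.
Variable g0 : 'M[K]_3.
Hypothesis ug0 : g0 \in unitmx.
Hypothesis hg0 : forall x, evalc F1 (g0 *m x) = evalc F2 x.

Lemma d0_false : F1 \is 0.-homog -> F2 \is 0.-homog -> smooth_X F1 F2 -> False.
Proof.
move=> h1 h2 sm.
have e1 := homog0_E h1; have e2 := homog0_E h2.
have ev1 x : evalc F1 x = F1@_0 by rewrite /evalc {1}e1 mevalC.
have ev2 x : evalc F2 x = F2@_0 by rewrite /evalc {1}e2 mevalC.
apply: (sm _ (const_nz K)).
  by rewrite ev1 ev2 -(ev1 (g0 *m 0)) hg0 ev2.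
split => i; rewrite /evalc.
  by rewrite e1 mderivC meval0.
by rewrite e2 mderivC meval0.
Qed.

Definition Gm (Q M : 'M[K]_3) :=
  invmx Q *m Phim (Q *m (M *m invmx g0) *m invmx Q) *m Q.

Lemma S_Aut1 : F1 \is 1.-homog -> F2 \is 1.-homog -> smooth_X F1 F2 ->
  exists f : SsetK F1 F2 -> Aut F1, injective f.
Proof.
move=> h1 h2 sm.
pose a := arow F1.
have ha x : evalc F1 x = (a *m x) 0 0 by exact: evalc_lin.
have an0 : a != 0.
  apply/negP => /eqP a0.
  have F1z x : evalc F1 x = 0 by rewrite ha a0 mul0mx mxE.
  have F1e : F1 = 0.
    rewrite (homog1_E h1) big1 // => j _.
    have := congr1 (fun A : 'rV_3 => A 0 j) a0; rewrite !mxE => ->.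
    by rewrite scale0r.
  have F2e : F2 = 0.
    rewrite (homog1_E h2) big1 // => j _.
    have := evalc_lin (delta_mx j 0) h2; rewrite -hg0 F1z -colE !mxE => <-.
    by rewrite scale0r.
  apply: (sm _ (const_nz K)).
    by rewrite F1z -hg0 F1z.
  by split => i; rewrite /evalc ?F1e ?F2e mderiv0 meval0.
case: (exists_Q an0) => Q [uQ eQ].
have aN (M : SsetK F1 F2) : a *m (sval M *m invmx g0) = a.
  apply: rv_ext => x; rewrite -mulmxA -!ha -mulmxA (proj2_sig M) -hg0.
  by rewrite mulmxA mulmxV // mul1mx.
have eN' (M : SsetK F1 F2) : e3 K *m (Q *m (sval M *m invmx g0) *m invmx Q) = e3 K.
  rewrite /e3 !mulmxA eQ -(mulmxA a) (aN M) -eQ -mulmxA mulmxV // mulmx1 //.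
have Gp (M : SsetK F1 F2) : Gm Q (sval M) \in unitmx /\
    forall x, evalc F1 (Gm Q (sval M) *m x) = evalc F1 x.
  split.
    rewrite /Gm unitmx_mul unitmx_mul unitmx_inv uQ Phim_unit //.
  move=> x; rewrite !ha mulmxA.
  suff -> : a *m Gm Q (sval M) = a by [].
  rewrite /Gm !mulmxA -eQ -(mulmxA _ Q (invmx Q)) mulmxV // mulmx1.
  by have := Phim_row0 (Q *m sval M *m invmx g0 *m invmx Q); rewrite /e3 => ->.
exists (fun M => exist _ (Gm Q (sval M)) (Gp M)).
move=> M1 M2 /(congr1 sval) /= eG.
have eP : Phim (Q *m (sval M1 *m invmx g0) *m invmx Q) =
          Phim (Q *m (sval M2 *m invmx g0) *m invmx Q).
  move: eG; rewrite /Gm => /(congr1 (fun X => Q *m X *m invmx Q)).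
  by rewrite !mulmxA mulmxV // !mul1mx !mulmxK.
have := Phim_inj (eN' M1) (eN' M2) eP.
move=> /(congr1 (fun X => invmx Q *m X *m Q)).
rewrite !mulmxA mulVmx // mul1mx !mulmxKV // => /(congr1 (mulmx^~ g0)).
rewrite !mulmxKV // => eM.
rewrite mul1mx in eM.
move: M1 M2 eM {eG eP} => [M1 h1'] [M2 h2'] /= eM; subst M2.
congr exist; exact: proof_irrelevance.
Qed.

End AutS1.

Lemma main_gen (K : numFieldType) (d : nat) (F1 F2 : {mpoly K[3]}) :
  F1 \is d.-homog -> F2 \is d.-homog ->
  smooth_X F1 F2 ->
  equiv_form F1 F2 ->
  exists f : rank3_planes_in_X F1 F2 -> Aut F1, bijective f.
Proof.
move=> h1 h2 sm [g0 [ug0 hg0]].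
have [fS injfS] : exists f : SsetK F1 F2 -> Aut F1, injective f.
  case: d h1 h2 => [|[|d]] h1 h2.
  - by case: (d0_false hg0 h1 h2 sm).
  - exact: (S_Aut1 ug0 hg0 h1 h2 sm).
  - have d2 : (1 < d.+2)%N by [].
    exists (fun M => exist (fun g : 'M[K]_3 => g \in unitmx /\ forall x, evalc F1 (g *m x) = evalc F1 x) _ (S_Aut_prop ug0 hg0 d2 h1 h2 sm M)).
    move=> [M hM] [M' hM'] /(congr1 sval) /= /(congr1 (mulmx^~ g0)).
    rewrite !mulmxKV // => e; subst M'; congr exist; exact: proof_irrelevance.
apply: (@SB_bij _ _ (fun U => fS (planes_to_S U))
                    (fun g => S_to_planes (Aut_to_S hg0 g))).
  move=> U U' /injfS; exact: planes_to_S_inj.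
move=> g g' /S_to_planes_inj; exact: Aut_to_S_inj.
Qed.

Unset Implicit Arguments.
Set Strict Implicit.

Theorem lemma2p2 (R : realType) (d : nat) (F1 F2 : {mpoly R[i][3]}) :
  F1 \is d.-homog -> F2 \is d.-homog ->
  smooth_X F1 F2 ->
  equiv_form F1 F2 ->
  exists f : rank3_planes_in_X F1 F2 -> Aut F1, bijective f.
Proof. exact: main_gen. Qed.
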